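(* Let $\{\phi_j\}_{j\in\mathbb Z}$ be the Fourier basis $\phi_j(t)=e^{\mathrm ij\pi t}$, $T=\{t_n\}_{n=1}^N\subseteq[-1,1]$ scattered points with density $h$, and suppose $hM\le1$. Then $$F(h,M,R)\lesssim\sqrt M\sup_{i\notin\{-R,\dots,R-1\}}\{1/w_i\}.$$ Moreover, if the weights satisfy $w_i\gtrsim|i|$ and $R\ge M$, then $$F(h,M,R)\lesssim h\sqrt M\sup_{i\notin\{-R,\dots,R-1\}}\{|i|/w_i\}.$$
   Context: Fourier setting: $D=(-1,1)$, $\nu=1/2$. $h=\sup_{t\in(-1,1)}\min_n|t-t_n|$; Voronoi cells $V_n=\{t\in(-1,1):|t-t_n|\le|t-t_m|\ \forall m\ne n\}$; $\tau_n=\int_{V_n}\nu$. $U_{n,j}=\sqrt{\tau_n}\phi_j(t_n)$, $j\in\mathbb Z$. Positive weights $w_i\ge1$, $i\in\mathbb Z$, $W=\mathrm{diag}(w_i)_{i\in\mathbb Z}$. For $L\in\mathbb N$, $P_L$ is the coordinate projection onto $\{-L,\dots,L-1\}$ and $P_L^\perp=I-P_L$. $F(h,M,R)=\|P_R^\perp W^{-1}U^*UP_M\|_\infty$ ($\ell^\infty$ operator norm). $a\lesssim b$ means $a\le Cb$ with $C$ independent of $h$, $M$, $R$, $N$, $T$. *)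

(* Defs.v *)
From Stdlib Require Import Reals ZArith ClassicalEpsilon.
From Coquelicot Require Import Coquelicot.
Open Scope R_scope.

(* Points: t 0, ..., t (N-1)  (the paper's t_1..t_N). *)

Definition phi (j : Z) (s : R) : C :=
  (cos (IZR j * PI * s), sin (IZR j * PI * s)).

Fixpoint mindist (t : nat -> R) (k : nat) (s : R) : R :=
  match k with
  | O => Rabs (s - t O)
  | S k' => Rmin (mindist t k' s) (Rabs (s - t (S k')))
  end.

(* h = sup_{s in (-1,1)} min_n |s - t_n| (finite since points lie in [-1,1]). *)
Definition hdens (N : nat) (t : nat -> R) : R :=
  real (Lub_Rbar (fun d => exists s, -1 < s < 1 /\ d = mindist t (N - 1) s)).

Definition voronoi (N : nat) (t : nat -> R) (n : nat) (s : R) : Prop :=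
  -1 < s < 1 /\ forall m, (m < N)%nat -> m <> n -> Rabs (s - t n) <= Rabs (s - t m).

(* tau_n = int_{V_n} nu, nu = 1/2 Lebesgue on (-1,1) *)
Definition tau (N : nat) (t : nat -> R) (n : nat) : R :=
  RInt (fun s => if excluded_middle_informative (voronoi N t n s) then / 2 else 0)
       (-1) 1.

Definition Umat (N : nat) (t : nat -> R) (n : nat) (j : Z) : C :=
  Cmult (RtoC (sqrt (tau N t n))) (phi j (t n)).

Fixpoint csum (k : nat) (f : nat -> C) : C :=
  match k with
  | O => RtoC 0
  | S k' => Cplus (csum k' f) (f k')
  end.

Definition inwin (L : nat) (i : Z) : Prop :=
  (- Z.of_nat L <= i <= Z.of_nat L - 1)%Z.

Definition PL (L : nat) (x : Z -> C) (i : Z) : C :=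
  if excluded_middle_informative (inwin L i) then x i else RtoC 0.

Definition PLperp (L : nat) (x : Z -> C) (i : Z) : C :=
  Cminus (x i) (PL L x i).

(* U applied to a sequence supported in {-M,...,M-1}: the matrix product
   (U y)_n = sum_j U_{n,j} y_j, where only j in {-M..M-1} can contribute. *)
Definition U_on (N : nat) (t : nat -> R) (M : nat) (y : Z -> C) (n : nat) : C :=
  csum (2 * M) (fun k => let j := (Z.of_nat k - Z.of_nat M)%Z in
                         Cmult (Umat N t n j) (y j)).

Definition Ustar (N : nat) (t : nat -> R) (y : nat -> C) (i : Z) : C :=
  csum N (fun n => Cmult (Cconj (Umat N t n i)) (y n)).

Definition Winv (w : Z -> R) (x : Z -> C) (i : Z) : C :=
  Cmult (RtoC (/ w i)) (x i).

Definition Aop (N : nat) (t : nat -> R) (w : Z -> R) (M Rr : nat)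
  (x : Z -> C) : Z -> C :=
  PLperp Rr (Winv w (Ustar N t (U_on N t M (PL M x)))).

(* F(h,M,R) = l^infty operator norm:
   sup { ||A x||_infty : ||x||_infty <= 1 } *)
Definition F_linf (N : nat) (t : nat -> R) (w : Z -> R) (M Rr : nat) : Rbar :=
  Lub_Rbar (fun r => exists x : Z -> C,
              (forall j, Cmod (x j) <= 1) /\
              exists i, r = Cmod (Aop N t w M Rr x i)).

Definition sup_out (Rr : nat) (g : Z -> R) : Rbar :=
  Lub_Rbar (fun r => exists i, ~ inwin Rr i /\ r = g i).

(* Main.v *)
Require Import Defs.
From Stdlib Require Import Reals ZArith Lra Lia List ClassicalEpsilon.
From Coquelicot Require Import Coquelicot.
Open Scope R_scope.

Fixpoint rsum (k : nat) (f : nat -> R) : R :=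
  match k with O => 0 | S k' => rsum k' f + f k' end.

Lemma rsum_ext K f g : (forall k, (k < K)%nat -> f k = g k) -> rsum K f = rsum K g.
Proof. induction K; simpl; intros H; auto. rewrite IHK by (intros; apply H; lia). rewrite H by lia. auto. Qed.

Lemma rsum_le K f g : (forall k, (k < K)%nat -> f k <= g k) -> rsum K f <= rsum K g.
Proof. induction K; simpl; intros H; [lra|]. assert (f K <= g K) by (apply H; lia).
assert (rsum K f <= rsum K g) by (apply IHK; intros; apply H; lia). lra. Qed.

Lemma rsum_plus K f g : rsum K (fun k => f k + g k) = rsum K f + rsum K g.
Proof. induction K; simpl; [lra|]. rewrite IHK; lra. Qed.

Lemma rsum_minus K f g : rsum K (fun k => f k - g k) = rsum K f - rsum K g.
Proof. induction K; simpl; [lra|]. rewrite IHK; lra. Qed.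

Lemma rsum_scal K c f : rsum K (fun k => c * f k) = c * rsum K f.
Proof. induction K; simpl; [lra|]. rewrite IHK; lra. Qed.

Lemma rsum_abs K f : Rabs (rsum K f) <= rsum K (fun k => Rabs (f k)).
Proof. induction K; simpl. rewrite Rabs_R0; lra.
eapply Rle_trans. apply Rabs_triang. lra. Qed.

Lemma rsum_nonneg K f : (forall k, (k < K)%nat -> 0 <= f k) -> 0 <= rsum K f.
Proof. intros H. replace 0 with (rsum K (fun _ => 0)). apply rsum_le; auto.
induction K; simpl; auto. rewrite IHK; [lra|]. intros; apply H; lia. Qed.

Lemma rsum_const K c : rsum K (fun _ => c) = INR K * c.
Proof. induction K; simpl rsum. simpl; lra. rewrite IHK, S_INR; lra. Qed.

Lemma rsum_delta K k g : (k < K)%nat -> (forall l, (l < K)%nat -> l <> k -> g l = 0) ->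
  rsum K g = g k.
Proof. induction K; intros Hk H; [lia|]. simpl.
destruct (Nat.eq_dec k K) as [->|Hne].
- replace (rsum K g) with 0. lra. symmetry. clear Hk.
  assert (forall l, (l < K)%nat -> g l = 0) by (intros; apply H; lia).
  clear H IHK. induction K; simpl; auto. rewrite IHK, H0; try lra; try lia. intros; apply H0; lia.
- rewrite IHK; try lia. rewrite (H K); try lia. lra. intros; apply H; lia. Qed.

Definition lsum (F : nat -> R) (l : list nat) : R := fold_right (fun n acc => F n + acc) 0 l.

Lemma lsum_filter F p l : lsum F l = lsum F (filter p l) + lsum F (filter (fun n => negb (p n)) l).
Proof. induction l; simpl; [lra|]. destruct (p a); simpl; rewrite IHl; lra. Qed.

Lemma lsum_app F l1 l2 : lsum F (l1 ++ l2) = lsum F l1 + lsum F l2.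
Proof. induction l1; simpl; [lra|]. unfold lsum in *; simpl. rewrite IHl1. lra. Qed.

Lemma rsum_lsum K F : rsum K F = lsum F (seq 0 K).
Proof. induction K; [simpl; auto|]. rewrite seq_S, lsum_app. simpl. rewrite IHK. unfold lsum; simpl. lra. Qed.

Lemma tiling_list (a b : nat -> R) : forall len l lo hi, (length l <= len)%nat -> NoDup l ->
  lo <= hi ->
  (forall n, In n l -> lo <= a n /\ a n < b n /\ b n <= hi) ->
  (forall n m, In n l -> In m l -> n <> m -> b n <= a m \/ b m <= a n) ->
  (forall s, lo < s < hi -> exists n, In n l /\ a n <= s <= b n) ->
  forall Ph : R -> R,
  lsum (fun n => Ph (b n) - Ph (a n)) l = Ph hi - Ph lo.
Proof.
induction len; intros l lo hi Hlen Hnd Hlh Hin Hno Hcov Ph.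
- destruct l; [|simpl in Hlen; lia]. simpl.
  destruct (Rle_lt_or_eq_dec _ _ Hlh) as [Hlt| ->]; [|lra].
  destruct (Hcov ((lo+hi)/2)) as [n [[] _]]. lra.
- destruct l as [|k rest].
  + simpl. destruct (Rle_lt_or_eq_dec _ _ Hlh) as [Hlt| ->]; [|lra].
    destruct (Hcov ((lo+hi)/2)) as [n [[] _]]. lra.
  + simpl. inversion Hnd; subst.
    set (p := fun n => if Rle_dec (b n) (a k) then true else false).
    rewrite (lsum_filter _ p rest).
    destruct (Hin k (or_introl eq_refl)) as [Hk1 [Hk2 Hk3]].
    assert (HL: forall n, In n (filter p rest) -> In n rest /\ b n <= a k).
    { intros n Hn. apply filter_In in Hn. destruct Hn as [Hn Hp]. unfold p in Hp.
      destruct Rle_dec; [auto|discriminate]. }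
    assert (HR: forall n, In n (filter (fun n => negb (p n)) rest) -> In n rest /\ b k <= a n).
    { intros n Hn. apply filter_In in Hn. destruct Hn as [Hn Hp]. unfold p in Hp.
      destruct Rle_dec; [discriminate|]. split; auto.
      assert (n <> k) by (intro; subst; auto).
      destruct (Hno n k) as [?|?]; simpl; auto; lra. }
    rewrite (IHlen (filter p rest) lo (a k)).
    rewrite (IHlen (filter (fun n => negb (p n)) rest) (b k) hi). lra.
    * simpl in Hlen. pose proof (filter_length_le (fun n => negb (p n)) rest). lia.
    * apply NoDup_filter; auto.
    * lra.
    * intros n Hn. destruct (HR n Hn) as [Hr Hb]. destruct (Hin n (or_intror Hr)) as [? [? ?]]. lra.
    * intros n m Hn Hm Hnm. apply Hno; auto; right; [apply (HR n Hn)|apply (HR m Hm)].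
    * intros s Hs. destruct (Hcov s) as [n [Hn Hns]]; [lra|].
      destruct Hn as [<-|Hn]; [lra|]. exists n. split; auto. apply filter_In. split; auto.
      unfold p. destruct Rle_dec; auto. lra.
    * simpl in Hlen. pose proof (filter_length_le p rest). lia.
    * apply NoDup_filter; auto.
    * lra.
    * intros n Hn. destruct (HL n Hn) as [Hr Hb]. destruct (Hin n (or_intror Hr)) as [? [? ?]]. lra.
    * intros n m Hn Hm Hnm. apply Hno; auto; right; [apply (HL n Hn)|apply (HL m Hm)].
    * intros s Hs. destruct (Hcov s) as [n [Hn Hns]]; [lra|].
      destruct Hn as [<-|Hn]; [lra|]. exists n. split; auto. apply filter_In. split; auto.
      unfold p. destruct Rle_dec; auto. exfalso.
      assert (n <> k) by (intro; subst; auto).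
      destruct (Hno n k) as [?|?]; simpl; auto; lra.
Qed.

Lemma tiling (N : nat) (a b : nat -> R) (lo hi : R) (Ph : R -> R) :
  lo <= hi ->
  (forall n, (n < N)%nat -> lo <= a n /\ a n < b n /\ b n <= hi) ->
  (forall n m, (n < N)%nat -> (m < N)%nat -> n <> m -> b n <= a m \/ b m <= a n) ->
  (forall s, lo < s < hi -> exists n, (n < N)%nat /\ a n <= s <= b n) ->
  rsum N (fun n => Ph (b n) - Ph (a n)) = Ph hi - Ph lo.
Proof.
intros Hlh Hin Hno Hcov. rewrite rsum_lsum.
apply (tiling_list a b (length (seq 0 N))); auto.
- apply seq_NoDup.
- intros n Hn; apply in_seq in Hn; apply Hin; lia.
- intros n m Hn Hm; apply in_seq in Hn; apply in_seq in Hm; apply Hno; lia.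
- intros s Hs; destruct (Hcov s Hs) as [n [? ?]]; exists n; split; auto; apply in_seq; lia.
Qed.

Lemma Rabs_le_inv x y : Rabs x <= y -> - y <= x <= y.
Proof. unfold Rabs; destruct Rcase_abs; lra. Qed.

Definition cont (f : R -> R) := forall x, continuous f x.

Lemma cont_ex f a b : cont f -> ex_RInt f a b.
Proof. intros H; apply (ex_RInt_continuous (V:=R_CompleteNormedModule)); intros; apply H. Qed.

Lemma RInt_chas f a b c : cont f -> RInt f a b + RInt f b c = RInt f a c.
Proof. intros H. rewrite <- (RInt_Chasles f a b c); auto using cont_ex. Qed.

Lemma cont_abs f : cont f -> cont (fun x => Rabs (f x)).
Proof. intros H x. apply (continuous_comp f Rabs). apply H. apply continuous_Rabs. Qed.

Lemma RInt_nonneg f a b : a <= b -> cont f -> (forall x, 0 <= f x) -> 0 <= RInt f a b.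
Proof. intros. apply RInt_ge_0; auto using cont_ex. Qed.

Lemma RInt_mono_int f x y r s : x <= r -> r <= s -> s <= y -> cont f -> (forall z, 0 <= f z) ->
  RInt f r s <= RInt f x y.
Proof. intros. rewrite <- (RInt_chas f x r y), <- (RInt_chas f r s y) by auto.
pose proof (RInt_nonneg f x r ltac:(lra) ltac:(auto) ltac:(auto)).
pose proof (RInt_nonneg f s y ltac:(lra) ltac:(auto) ltac:(auto)). lra. Qed.

Lemma ftc_bound u du : (forall x, is_derive u x (du x)) -> cont du ->
  forall x y s r, x <= s <= y -> x <= r <= y ->
  Rabs (u s - u r) <= RInt (fun z => Rabs (du z)) x y.
Proof.
intros Hd Hc.
assert (Hmain: forall x y s r, x <= r <= s -> s <= y ->
  Rabs (u s - u r) <= RInt (fun z => Rabs (du z)) x y).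
{ intros x y s r [Hxr Hrs] Hsy.
  assert (E: RInt du r s = u s - u r).
  { apply is_RInt_unique. apply (is_RInt_derive u du). intros; apply Hd. intros; apply Hc. }
  rewrite <- E. eapply Rle_trans. apply abs_RInt_le; auto using cont_ex.
  apply RInt_mono_int; auto. apply cont_abs; auto. intros; apply Rabs_pos. }
intros x y s r Hs Hr. destruct (Rle_dec r s).
- apply Hmain; lra.
- rewrite Rabs_minus_sym. apply Hmain; lra.
Qed.

Lemma RInt_const_R a b c : RInt (fun _ => c) a b = (b - a) * c.
Proof. rewrite RInt_const. reflexivity. Qed.

Lemma cell_bound w a b t K : a <= t <= b -> cont w ->
  (forall s, a <= s <= b -> Rabs (w s - w t) <= K) ->
  Rabs ((b - a) * w t - RInt w a b) <= (b - a) * K.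
Proof.
intros Ht Hc HK.
assert (H1: RInt (fun _ => w t - K) a b <= RInt w a b).
{ apply RInt_le; try lra; auto using cont_ex. apply ex_RInt_const.
  intros s Hs. specialize (HK s ltac:(lra)). apply Rabs_le_inv in HK. lra. }
assert (H2: RInt w a b <= RInt (fun _ => w t + K) a b).
{ apply RInt_le; try lra; auto using cont_ex. apply ex_RInt_const.
  intros s Hs. specialize (HK s ltac:(lra)). apply Rabs_le_inv in HK. lra. }
rewrite !RInt_const_R in *. apply Rabs_le. lra.
Qed.

Lemma generic (N : nat) (t a b : nat -> R) (h : R) (w rho : R -> R) :
  (forall n, (n < N)%nat -> -1 <= a n /\ a n < b n /\ b n <= 1 /\ a n <= t n <= b n /\ b n - a n <= 2 * h) ->
  (forall n m, (n < N)%nat -> (m < N)%nat -> n <> m -> b n <= a m \/ b m <= a n) ->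
  (forall s, -1 < s < 1 -> exists n, (n < N)%nat /\ a n <= s <= b n) ->
  cont w -> cont rho -> (forall x, 0 <= rho x) ->
  (forall x y s r, x <= s <= y -> x <= r <= y -> Rabs (w s - w r) <= RInt rho x y) ->
  Rabs (rsum N (fun n => (b n - a n) * w (t n)) - RInt w (-1) 1) <= 2 * h * RInt rho (-1) 1.
Proof.
intros Hcell Hno Hcov Hw Hr Hr0 HL.
assert (Ht1: forall Ph : R -> R, rsum N (fun n => Ph (b n) - Ph (a n)) = Ph 1 - Ph (-1)).
{ intros Ph. apply tiling; try lra; auto.
  intros n Hn; destruct (Hcell n Hn) as [? [? [? ?]]]; lra. }
assert (Ew: RInt w (-1) 1 = rsum N (fun n => RInt w (a n) (b n))).
{ rewrite (rsum_ext N _ (fun n => RInt w (-1) (b n) - RInt w (-1) (a n))).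
  rewrite (Ht1 (fun x => RInt w (-1) x)). rewrite RInt_point. simpl. unfold zero; simpl. lra.
  intros k _. rewrite <- (RInt_chas w (-1) (a k) (b k)); auto. lra. }
assert (Er: RInt rho (-1) 1 = rsum N (fun n => RInt rho (a n) (b n))).
{ rewrite (rsum_ext N _ (fun n => RInt rho (-1) (b n) - RInt rho (-1) (a n))).
  rewrite (Ht1 (fun x => RInt rho (-1) x)). rewrite RInt_point. simpl. unfold zero; simpl. lra.
  intros k _. rewrite <- (RInt_chas rho (-1) (a k) (b k)); auto. lra. }
rewrite Ew, Er, <- rsum_minus, <- rsum_scal.
eapply Rle_trans. apply rsum_abs. apply rsum_le. intros n Hn.
destruct (Hcell n Hn) as [H1 [H2 [H3 [H4 H5]]]].
eapply Rle_trans. apply (cell_bound w (a n) (b n) (t n) (RInt rho (a n) (b n))).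
lra. auto. intros s Hs. apply HL; lra.
apply Rmult_le_compat_r; [|lra]. apply RInt_nonneg; auto; lra.
Qed.

Definition TR (K : nat) (al be : nat -> R) (m : nat -> Z) (s : R) : R :=
  rsum K (fun k => al k * cos (IZR (m k) * PI * s) - be k * sin (IZR (m k) * PI * s)).
Definition TI (K : nat) (al be : nat -> R) (m : nat -> Z) (s : R) : R :=
  rsum K (fun k => al k * sin (IZR (m k) * PI * s) + be k * cos (IZR (m k) * PI * s)).
Definition dal (al be : nat -> R) (m : nat -> Z) k := - be k * (IZR (m k) * PI).
Definition dbe (al be : nat -> R) (m : nat -> Z) k := al k * (IZR (m k) * PI).

Lemma is_derive_rsum K (g dg : nat -> R -> R) x :
  (forall k, (k < K)%nat -> is_derive (g k) x (dg k x)) ->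
  is_derive (fun s => rsum K (fun k => g k s)) x (rsum K (fun k => dg k x)).
Proof.
induction K; intros H; simpl.
- apply (is_derive_const (K:=R_AbsRing) (V:=R_NormedModule) (0:R)).
- apply (is_derive_plus (K:=R_AbsRing) (V:=R_NormedModule)
    (fun s => rsum K (fun k => g k s)) (g K)).
  apply IHK; intros; apply H; lia. apply H; lia.
Qed.

Lemma TR_deriv K al be m x : is_derive (TR K al be m) x (TR K (dal al be m) (dbe al be m) m x).
Proof.
unfold TR. apply (is_derive_rsum K (fun k s => al k * cos (IZR (m k) * PI * s) - be k * sin (IZR (m k) * PI * s))
  (fun k s => dal al be m k * cos (IZR (m k) * PI * s) - dbe al be m k * sin (IZR (m k) * PI * s))).
intros k _. unfold dal, dbe. auto_derive; auto. ring.
Qed.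

Lemma TI_deriv K al be m x : is_derive (TI K al be m) x (TI K (dal al be m) (dbe al be m) m x).
Proof.
unfold TI. apply (is_derive_rsum K (fun k s => al k * sin (IZR (m k) * PI * s) + be k * cos (IZR (m k) * PI * s))
  (fun k s => dal al be m k * sin (IZR (m k) * PI * s) + dbe al be m k * cos (IZR (m k) * PI * s))).
intros k _. unfold dal, dbe. auto_derive; auto. ring.
Qed.

Lemma TR_cont K al be m : cont (TR K al be m).
Proof. intros x. apply (ex_derive_continuous (K:=R_AbsRing) (V:=R_NormedModule)). eexists. apply TR_deriv. Qed.
Lemma TI_cont K al be m : cont (TI K al be m).
Proof. intros x. apply (ex_derive_continuous (K:=R_AbsRing) (V:=R_NormedModule)). eexists. apply TI_deriv. Qed.

Lemma is_RInt_zero a b : is_RInt (fun _ => 0) a b 0.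
Proof. pose proof (is_RInt_const (V:=R_NormedModule) a b 0). unfold scal in H; simpl in H; unfold mult in H; simpl in H. rewrite Rmult_0_r in H. exact H. Qed.

Lemma is_RInt_rsum K (g : nat -> R -> R) (I : nat -> R) a b :
  (forall k, (k < K)%nat -> is_RInt (g k) a b (I k)) ->
  is_RInt (fun s => rsum K (fun k => g k s)) a b (rsum K I).
Proof.
induction K; intros H; simpl.
- apply is_RInt_zero.
- apply (is_RInt_plus (V:=R_NormedModule) (fun s => rsum K (fun k => g k s)) (g K)).
  apply IHK; intros; apply H; lia. apply H; lia.
Qed.

Lemma is_RInt_lin f g a b If Ig c1 c2 : is_RInt f a b If -> is_RInt g a b Ig ->
  is_RInt (fun x => c1 * f x + c2 * g x) a b (c1 * If + c2 * Ig).
Proof.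
intros Hf Hg.
apply (is_RInt_plus (V:=R_NormedModule) (fun x => c1 * f x) (fun x => c2 * g x)).
apply (is_RInt_scal (V:=R_NormedModule) f a b c1 If Hf).
apply (is_RInt_scal (V:=R_NormedModule) g a b c2 Ig Hg).
Qed.

Lemma int_cos (d : Z) : is_RInt (fun s => cos (IZR d * PI * s)) (-1) 1 (if Z.eq_dec d 0 then 2 else 0).
Proof.
destruct (Z.eq_dec d 0) as [->|Hd].
- apply (is_RInt_ext (fun _ => 1)).
  intros x _. rewrite Rmult_0_l, Rmult_0_l, cos_0. auto.
  replace 2 with (scal (1 - -1) 1). apply (is_RInt_const (V:=R_NormedModule)).
  unfold scal; simpl; unfold mult; simpl. ring.
- assert (Hc: IZR d * PI <> 0).
  { apply Rmult_integral_contrapositive. split. apply not_0_IZR; auto. apply PI_neq0. }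
  assert (H := is_RInt_derive (V:=R_CompleteNormedModule)
     (fun s => sin (IZR d * PI * s) / (IZR d * PI)) (fun s => cos (IZR d * PI * s)) (-1) 1).
  match type of H with _ -> _ -> is_RInt _ _ _ ?v => replace 0 with v end.
  apply H.
  + intros y _. auto_derive; auto. field. split; [apply PI_neq0|apply not_0_IZR; auto].
  + intros y _. apply (ex_derive_continuous (K:=R_AbsRing) (V:=R_NormedModule)). auto_derive. auto.
  + unfold minus, plus, opp; simpl.
    replace (IZR d * PI * -1) with (- (IZR d * PI * 1)) by ring. rewrite sin_neg.
    rewrite Rmult_1_r. rewrite (sin_eq_0_1 (IZR d * PI)) by (exists d; auto). field. split; [apply PI_neq0|apply not_0_IZR; auto].
Qed.

Lemma int_sin (d : Z) : is_RInt (fun s => sin (IZR d * PI * s)) (-1) 1 0.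
Proof.
destruct (Z.eq_dec d 0) as [->|Hd].
- apply (is_RInt_ext (fun _ => 0)).
  intros x _. rewrite Rmult_0_l, Rmult_0_l, sin_0. auto.
  apply is_RInt_zero.
- assert (Hc: IZR d * PI <> 0).
  { apply Rmult_integral_contrapositive. split. apply not_0_IZR; auto. apply PI_neq0. }
  assert (H := is_RInt_derive (V:=R_CompleteNormedModule)
     (fun s => - cos (IZR d * PI * s) / (IZR d * PI)) (fun s => sin (IZR d * PI * s)) (-1) 1).
  match type of H with _ -> _ -> is_RInt _ _ _ ?v => replace 0 with v end.
  apply H.
  + intros y _. auto_derive; auto. field. split; [apply PI_neq0|apply not_0_IZR; auto].
  + intros y _. apply (ex_derive_continuous (K:=R_AbsRing) (V:=R_NormedModule)). auto_derive. auto.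
  + unfold minus, plus, opp; simpl.
    replace (IZR d * PI * -1) with (- (IZR d * PI * 1)) by ring. rewrite cos_neg. field. split; [apply PI_neq0|apply not_0_IZR; auto].
Qed.

Lemma rsum_mult_r K f G : rsum K f * G = rsum K (fun k => f k * G).
Proof. induction K; simpl; [ring|]. rewrite <- IHK. ring. Qed.

Lemma rsum_prod K f g : rsum K f * rsum K g = rsum K (fun k => rsum K (fun l => f k * g l)).
Proof. rewrite rsum_mult_r. apply rsum_ext. intros k _. rewrite <- rsum_scal. auto. Qed.

Definition Pkl (al be : nat -> R) (m : nat -> Z) k l s :=
  (al k * al l + be k * be l) * cos (IZR (m k - m l) * PI * s)
  + (al k * be l - be k * al l) * sin (IZR (m k - m l) * PI * s).

Lemma TRTI_sq K al be m s :
  TR K al be m s * TR K al be m s + TI K al be m s * TI K al be m s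
  = rsum K (fun k => rsum K (fun l => Pkl al be m k l s)).
Proof.
unfold TR, TI. rewrite !rsum_prod, <- rsum_plus. apply rsum_ext; intros k _.
rewrite <- rsum_plus. apply rsum_ext; intros l _. unfold Pkl.
rewrite minus_IZR. replace ((IZR (m k) - IZR (m l)) * PI * s) with
  (IZR (m k) * PI * s - IZR (m l) * PI * s) by ring.
rewrite cos_minus, sin_minus. ring.
Qed.

Lemma parseval K al be m : (forall k l, (k < K)%nat -> (l < K)%nat -> m k = m l -> k = l) ->
  is_RInt (fun s => TR K al be m s * TR K al be m s + TI K al be m s * TI K al be m s) (-1) 1
    (2 * rsum K (fun k => al k * al k + be k * be k)).
Proof.
intros Hinj.
apply (is_RInt_ext (fun s => rsum K (fun k => rsum K (fun l => Pkl al be m k l s)))).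
{ intros; symmetry; apply TRTI_sq. }
rewrite <- rsum_scal. apply is_RInt_rsum. intros k Hk.
set (I' := fun l => (al k * al l + be k * be l) * (if Z.eq_dec (m k - m l) 0 then 2 else 0)
                    + (al k * be l - be k * al l) * 0).
replace (2 * (al k * al k + be k * be k)) with (rsum K I').
- apply is_RInt_rsum. intros l Hl. unfold Pkl, I'.
  apply is_RInt_lin. apply int_cos. apply int_sin.
- rewrite (rsum_delta K k); auto.
  + unfold I'. rewrite Z.sub_diag. destruct (Z.eq_dec 0 0); [ring|congruence].
  + intros l Hl Hlk. unfold I'. destruct (Z.eq_dec (m k - m l) 0) as [e|e]; [|ring].
    exfalso. apply Hlk. symmetry. apply Hinj; auto. lia.
Qed.

Lemma TR_mean0 K al be m : (forall k, (k < K)%nat -> m k <> 0%Z) ->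
  is_RInt (TR K al be m) (-1) 1 0.
Proof.
intros H. unfold TR.
replace 0 with (rsum K (fun k => al k * 0 + (- be k) * 0)).
- apply is_RInt_rsum. intros k Hk.
  apply (is_RInt_ext (fun s => al k * cos (IZR (m k) * PI * s) + (- be k) * sin (IZR (m k) * PI * s))).
  intros x _; unfold Rminus; rewrite Ropp_mult_distr_l; reflexivity.
  pose proof (int_cos (m k)) as Hc. destruct (Z.eq_dec (m k) 0) as [e|_]; [exfalso; apply (H k Hk e)|].
  apply is_RInt_lin; auto. apply int_sin.
- clear H. induction K; simpl; auto. rewrite IHK. ring.
Qed.

Lemma TI_mean0 K al be m : (forall k, (k < K)%nat -> m k <> 0%Z) ->
  is_RInt (TI K al be m) (-1) 1 0.
Proof.
intros H. unfold TI.
replace 0 with (rsum K (fun k => al k * 0 + be k * 0)).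
- apply is_RInt_rsum. intros k Hk.
  apply (is_RInt_ext (fun s => be k * cos (IZR (m k) * PI * s) + al k * sin (IZR (m k) * PI * s))).
  intros x _; apply Rplus_comm.
  pose proof (int_cos (m k)) as Hc. destruct (Z.eq_dec (m k) 0) as [e|_]; [exfalso; apply (H k Hk e)|].
  replace (al k * 0 + be k * 0) with (be k * 0 + al k * 0) by ring.
  apply is_RInt_lin; auto. apply int_sin.
- clear H. induction K; simpl; auto. rewrite IHK. ring.
Qed.

Lemma is_RInt_one : is_RInt (fun _ => 1) (-1) 1 2.
Proof. pose proof (is_RInt_const (V:=R_NormedModule) (-1) 1 1) as H.
unfold scal in H; simpl in H; unfold mult in H; simpl in H. replace 2 with ((1 - -1) * 1) by ring. exact H. Qed.

Lemma L1_gen (u v : R -> R) S : cont u -> 0 <= S ->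
  is_RInt (fun s => u s * u s + v s * v s) (-1) 1 (2 * S) ->
  RInt (fun s => Rabs (u s)) (-1) 1 <= 2 * sqrt S.
Proof.
intros Hu HS Hint.
assert (Hl: forall l, 0 < l -> RInt (fun s => Rabs (u s)) (-1) 1 <= S / l + l).
{ intros l Hl.
  assert (Hg: is_RInt (fun s => / (2 * l) * (u s * u s + v s * v s) + (l / 2) * 1) (-1) 1
                (/ (2 * l) * (2 * S) + (l / 2) * 2)).
  { apply is_RInt_lin; auto. apply is_RInt_one. }
  replace (S / l + l) with (/ (2 * l) * (2 * S) + (l / 2) * 2) by (field; lra).
  rewrite <- (is_RInt_unique _ _ _ _ Hg).
  apply RInt_le; try lra. apply cont_ex, cont_abs, Hu. eexists; exact Hg.
  intros x _. set (a := Rabs (u x)). assert (Ha: u x * u x = a * a).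
  { unfold a. rewrite <- Rabs_mult. rewrite Rabs_pos_eq; auto. nra. }
  rewrite Ha. apply (Rmult_le_reg_l (2 * l)); [lra|].
  replace (2 * l * (/ (2 * l) * (a * a + v x * v x) + l / 2 * 1)) with (a * a + v x * v x + l * l) by (field; lra).
  pose proof (Rle_0_sqr (a - l)); pose proof (Rle_0_sqr (v x)); unfold Rsqr in *; nra. }
destruct (Rle_lt_or_eq_dec _ _ HS) as [Hp| <-].
- eapply Rle_trans. apply (Hl (sqrt S)). apply sqrt_lt_R0; auto.
  pose proof (sqrt_sqrt S HS). pose proof (sqrt_lt_R0 S Hp).
  replace (S / sqrt S) with (sqrt S * sqrt S / sqrt S) by (rewrite H; auto).
  replace (sqrt S * sqrt S / sqrt S) with (sqrt S) by (field; lra). lra.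
- rewrite sqrt_0. destruct (Rle_dec (RInt (fun s => Rabs (u s)) (-1) 1) 0) as [?|Hn]; [lra|].
  exfalso. apply Rnot_le_lt in Hn. specialize (Hl (RInt (fun s => Rabs (u s)) (-1) 1 / 2) ltac:(lra)).
  replace (0 / (RInt (fun s => Rabs (u s)) (-1) 1 / 2)) with 0 in Hl by (field; lra). lra.
Qed.

Lemma sumsq_nonneg K (al be : nat -> R) : 0 <= rsum K (fun k => al k * al k + be k * be k).
Proof. apply rsum_nonneg. intros; nra. Qed.

Lemma L1_TR K al be m : (forall k l, (k < K)%nat -> (l < K)%nat -> m k = m l -> k = l) ->
  RInt (fun s => Rabs (TR K al be m s)) (-1) 1 <= 2 * sqrt (rsum K (fun k => al k * al k + be k * be k)).
Proof.
intros H. apply (L1_gen _ (TI K al be m)). apply TR_cont. apply sumsq_nonneg. apply parseval; auto.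
Qed.

Lemma L1_TI K al be m : (forall k l, (k < K)%nat -> (l < K)%nat -> m k = m l -> k = l) ->
  RInt (fun s => Rabs (TI K al be m s)) (-1) 1 <= 2 * sqrt (rsum K (fun k => al k * al k + be k * be k)).
Proof.
intros H. apply (L1_gen _ (TR K al be m)). apply TI_cont. apply sumsq_nonneg.
apply (is_RInt_ext (fun s => TR K al be m s * TR K al be m s + TI K al be m s * TI K al be m s)).
intros x _; apply Rplus_comm. apply parseval; auto.
Qed.

Fixpoint lof (t : nat -> R) (n k : nat) : R :=
  match k with O => -1
  | S k' => Rmax (lof t n k') (if Rlt_dec (t k') (t n) then (t k' + t n) / 2 else -1) end.
Fixpoint hif (t : nat -> R) (n k : nat) : R :=
  match k with O => 1
  | S k' => Rmin (hif t n k') (if Rlt_dec (t n) (t k') then (t k' + t n) / 2 else 1) end.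

Lemma lof_iff t n k s : lof t n k <= s <-> (-1 <= s /\ forall m, (m < k)%nat -> t m < t n -> (t m + t n) / 2 <= s).
Proof.
induction k; simpl.
- split. intros; split; auto; intros; lia. tauto.
- split.
  + intros H. assert (H1 := Rle_trans _ _ _ (Rmax_l _ _) H). assert (H2 := Rle_trans _ _ _ (Rmax_r _ _) H).
    apply IHk in H1. destruct H1 as [H1 H3]. split; auto. intros m Hm Hlt.
    destruct (Nat.eq_dec m k) as [->|Hne]. destruct Rlt_dec; [auto|contradiction].
    apply H3; auto; lia.
  + intros [H1 H2]. apply Rmax_lub.
    * apply IHk. split; [exact H1|]. intros m Hm Hlt; apply H2; auto.
    * destruct (Rlt_dec (t k) (t n)) as [r|r]; [apply H2; auto|exact H1].
Qed.

Lemma hif_iff t n k s : s <= hif t n k <-> (s <= 1 /\ forall m, (m < k)%nat -> t n < t m -> s <= (t m + t n) / 2).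
Proof.
induction k; simpl.
- split. intros; split; auto; intros; lia. tauto.
- split.
  + intros H. assert (H1 := Rle_trans _ _ _ H (Rmin_l _ _)). assert (H2 := Rle_trans _ _ _ H (Rmin_r _ _)).
    apply IHk in H1. destruct H1 as [H1 H3]. split; auto. intros m Hm Hlt.
    destruct (Nat.eq_dec m k) as [->|Hne]. destruct Rlt_dec; [auto|contradiction].
    apply H3; auto; lia.
  + intros [H1 H2]. apply Rmin_glb.
    * apply IHk. split; [exact H1|]. intros m Hm Hlt; apply H2; auto.
    * destruct (Rlt_dec (t n) (t k)) as [r|r]; [apply H2; auto|exact H1].
Qed.

Lemma lof_lt t n k : -1 < t n -> lof t n k < t n.
Proof. intros H. induction k; simpl; auto. apply Rmax_lub_lt; auto. destruct Rlt_dec; lra. Qed.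

Lemma hif_gt t n k : t n < 1 -> t n < hif t n k.
Proof. intros H. induction k; simpl; auto. apply Rmin_glb_lt; auto. destruct Rlt_dec; lra. Qed.

Lemma lof_ge t n k : -1 <= lof t n k.
Proof. induction k; simpl. lra. eapply Rle_trans; [apply IHk|apply Rmax_l]. Qed.

Lemma hif_le t n k : hif t n k <= 1.
Proof. induction k; simpl. lra. eapply Rle_trans; [apply Rmin_l|apply IHk]. Qed.

Lemma abs_cmp_lt x y s : x < y -> (Rabs (s - y) <= Rabs (s - x) <-> (x + y) / 2 <= s).
Proof. intros H. unfold Rabs; destruct Rcase_abs; destruct Rcase_abs; split; intros; lra. Qed.
Lemma abs_cmp_gt x y s : y < x -> (Rabs (s - y) <= Rabs (s - x) <-> s <= (x + y) / 2).
Proof. intros H. unfold Rabs; destruct Rcase_abs; destruct Rcase_abs; split; intros; lra. Qed.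

Section Cells.
Variable N : nat.
Variable t : nat -> R.
Hypothesis HN : (0 < N)%nat.
Hypothesis Ht : forall n, (n < N)%nat -> -1 <= t n <= 1.
Hypothesis Hinj : forall n m, (n < N)%nat -> (m < N)%nat -> t n = t m -> n = m.

Definition ca n := lof t n N.
Definition cb n := hif t n N.

Lemma vor_iff n s : (n < N)%nat -> (voronoi N t n s <-> (-1 < s < 1 /\ ca n <= s <= cb n)).
Proof.
intros Hn. unfold voronoi, ca, cb. rewrite lof_iff, hif_iff. split.
- intros [Hs H]. split; auto. split; split; try lra.
  + intros m Hm Hlt. apply (abs_cmp_lt (t m) (t n) s Hlt). apply H; auto. intro; subst; lra.
  + intros m Hm Hlt. apply (abs_cmp_gt (t m) (t n) s Hlt). apply H; auto. intro; subst; lra.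
- intros [Hs [[_ H1] [_ H2]]]. split; auto. intros m Hm Hne.
  assert (t m <> t n) by (intro E; apply Hne; apply Hinj; auto).
  destruct (Rlt_dec (t m) (t n)).
  + apply (abs_cmp_lt (t m) (t n) s); auto.
  + apply (abs_cmp_gt (t m) (t n) s); [lra|]. apply H2; auto; lra.
Qed.

Lemma cell_props n : (n < N)%nat -> -1 <= ca n /\ ca n < cb n /\ cb n <= 1 /\ ca n <= t n <= cb n.
Proof.
intros Hn. destruct (Ht n Hn) as [H1 H2]. unfold ca, cb.
pose proof (lof_ge t n N). pose proof (hif_le t n N).
assert (La: lof t n N <= t n). { apply lof_iff. split; auto. intros; lra. }
assert (Hb: t n <= hif t n N). { apply hif_iff. split; auto. intros; lra. }
repeat split; auto.
destruct (Rlt_dec (-1) (t n)). pose proof (lof_lt t n N r). lra.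
assert (t n = -1) by lra. pose proof (hif_gt t n N ltac:(lra)). lra.
Qed.

Lemma cell_nonoverlap n m : (n < N)%nat -> (m < N)%nat -> n <> m -> cb n <= ca m \/ cb m <= ca n.
Proof.
intros Hn Hm Hnm. assert (t n <> t m) by (intro E; apply Hnm; apply Hinj; auto).
unfold ca, cb. destruct (Rlt_dec (t n) (t m)).
- left. assert (hif t n N <= (t m + t n) / 2).
  { pose proof (proj1 (hif_iff t n N (hif t n N)) (Rle_refl _)) as [_ H']. apply H'; auto. }
  assert ((t n + t m) / 2 <= lof t m N).
  { pose proof (proj1 (lof_iff t m N (lof t m N)) (Rle_refl _)) as [_ H']. apply H'; auto. }
  lra.
- right. assert (t m < t n) by lra. assert (hif t m N <= (t n + t m) / 2).
  { pose proof (proj1 (hif_iff t m N (hif t m N)) (Rle_refl _)) as [_ H']. apply H'; auto. }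
  assert ((t m + t n) / 2 <= lof t n N).
  { pose proof (proj1 (lof_iff t n N (lof t n N)) (Rle_refl _)) as [_ H']. apply H'; auto. }
  lra.
Qed.

Lemma argmin s : exists n, (n < N)%nat /\ forall m, (m < N)%nat -> Rabs (s - t n) <= Rabs (s - t m).
Proof.
destruct N as [|K]; [lia|]. clear HN Ht Hinj. induction K.
- exists 0%nat. split; auto. intros m Hm. assert (m = 0%nat) by lia. subst; lra.
- destruct IHK as [n [Hn H]]. destruct (Rle_dec (Rabs (s - t n)) (Rabs (s - t (S K)))).
  + exists n. split; [lia|]. intros m Hm. destruct (Nat.eq_dec m (S K)) as [->|]; auto. apply H; lia.
  + exists (S K). split; [lia|]. intros m Hm. destruct (Nat.eq_dec m (S K)) as [->|]; [lra|].
    specialize (H m ltac:(lia)). lra.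
Qed.

Lemma cell_cover s : -1 < s < 1 -> exists n, (n < N)%nat /\ ca n <= s <= cb n.
Proof.
intros Hs. destruct (argmin s) as [n [Hn H]]. exists n. split; auto.
assert (Hv: voronoi N t n s) by (split; auto; intros m Hm _; apply H; auto).
apply (vor_iff n s Hn) in Hv. tauto.
Qed.

Lemma mindist_attained k s : exists m, (m <= k)%nat /\ mindist t k s = Rabs (s - t m).
Proof.
induction k; simpl. exists 0%nat; auto.
destruct IHk as [m [Hm E]]. unfold Rmin. destruct Rle_dec.
- exists m; split; auto.
- exists (S k); split; auto.
Qed.

Lemma mindist_nonneg k s : 0 <= mindist t k s.
Proof. destruct (mindist_attained k s) as [m [_ ->]]. apply Rabs_pos. Qed.

Lemma mindist_le0 k s : mindist t k s <= Rabs (s - t 0).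
Proof. induction k; simpl. lra. eapply Rle_trans; [apply Rmin_l|auto]. Qed.

Variable h : R.
Hypothesis Hh : forall s, -1 < s < 1 -> mindist t (N - 1) s <= h.

Lemma vor_h n s : (n < N)%nat -> voronoi N t n s -> Rabs (s - t n) <= h.
Proof.
intros Hn [Hs H]. destruct (mindist_attained (N - 1) s) as [m [Hm E]].
eapply Rle_trans; [|apply (Hh s Hs)]. rewrite E.
destruct (Nat.eq_dec m n) as [->|Hne]; [lra|]. apply H; auto; lia.
Qed.

Lemma h_nonneg : 0 <= h.
Proof. eapply Rle_trans; [apply (mindist_nonneg (N - 1) 0)|]. apply Hh; lra. Qed.

Lemma cell_len n : (n < N)%nat -> cb n - ca n <= 2 * h.
Proof.
intros Hn. destruct (cell_props n Hn) as [H1 [H2 [H3 [H4 H5]]]]. pose proof h_nonneg.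
assert (A: cb n - t n <= h).
{ destruct (Rle_dec (cb n - t n) h) as [?|Hc]; auto. exfalso.
  set (s := t n + (h + (cb n - t n)) / 2).
  assert (Hv: voronoi N t n s). { apply (vor_iff n s Hn). unfold s; lra. }
  pose proof (vor_h n s Hn Hv). rewrite Rabs_pos_eq in H0 by (unfold s; lra). unfold s in H0. lra. }
assert (B: t n - ca n <= h).
{ destruct (Rle_dec (t n - ca n) h) as [?|Hc]; auto. exfalso.
  set (s := t n - (h + (t n - ca n)) / 2).
  assert (Hv: voronoi N t n s). { apply (vor_iff n s Hn). unfold s; lra. }
  pose proof (vor_h n s Hn Hv). rewrite Rabs_left1 in H0 by (unfold s; lra). unfold s in H0. lra. }
lra.
Qed.

End Cells.

Lemma tau_eq N t n : (0 < N)%nat -> (forall n, (n < N)%nat -> -1 <= t n <= 1) ->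
  (forall n m, (n < N)%nat -> (m < N)%nat -> t n = t m -> n = m) -> (n < N)%nat ->
  tau N t n = (cb N t n - ca N t n) / 2.
Proof.
intros HN Ht Hinj Hn.
destruct (cell_props N t Ht n Hn) as [H1 [H2 [H3 _]]].
set (f := fun s => if excluded_middle_informative (voronoi N t n s) then / 2 else 0).
assert (I1: is_RInt f (-1) (ca N t n) 0).
{ apply (is_RInt_ext (fun _ => 0)). intros x Hx. rewrite Rmin_left, Rmax_right in Hx by lra.
  unfold f. destruct excluded_middle_informative as [v|v]; auto.
  apply (vor_iff N t Hinj n x Hn) in v. lra. apply is_RInt_zero. }
assert (I2: is_RInt f (ca N t n) (cb N t n) ((cb N t n - ca N t n) * / 2)).
{ apply (is_RInt_ext (fun _ => / 2)). intros x Hx. rewrite Rmin_left, Rmax_right in Hx by lra.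
  unfold f. destruct excluded_middle_informative as [v|v]; auto.
  exfalso; apply v. apply (vor_iff N t Hinj n x Hn). lra.
  apply (is_RInt_const (V:=R_NormedModule)). }
assert (I3: is_RInt f (cb N t n) 1 0).
{ apply (is_RInt_ext (fun _ => 0)). intros x Hx. rewrite Rmin_left, Rmax_right in Hx by lra.
  unfold f. destruct excluded_middle_informative as [v|v]; auto.
  apply (vor_iff N t Hinj n x Hn) in v. lra. apply is_RInt_zero. }
pose proof (is_RInt_Chasles f _ _ _ _ _ (is_RInt_Chasles f _ _ _ _ _ I1 I2) I3) as I.
transitivity (RInt f (-1) 1); [reflexivity|]. rewrite (is_RInt_unique _ _ _ _ I).
unfold plus; simpl. field.
Qed.

Lemma hdens_ub N t : (0 < N)%nat -> (forall n, (n < N)%nat -> -1 <= t n <= 1) ->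
  forall s, -1 < s < 1 -> mindist t (N - 1) s <= hdens N t.
Proof.
intros HN Ht s Hs. unfold hdens.
destruct (Lub_Rbar_correct (fun d => exists s, -1 < s < 1 /\ d = mindist t (N - 1) s)) as [Hub Hl].
revert Hub Hl. generalize (Lub_Rbar (fun d => exists s, -1 < s < 1 /\ d = mindist t (N - 1) s)).
intros l Hub Hl.
assert (Hs2: Rbar_le (Finite (mindist t (N - 1) s)) l) by (apply Hub; exists s; auto).
assert (Hle2: Rbar_le l (Finite 2)).
{ apply Hl. intros x [s' [Hs' ->]]. simpl. eapply Rle_trans. apply mindist_le0.
  destruct (Ht 0%nat HN). unfold Rabs; destruct Rcase_abs; lra. }
destruct l as [l| |]; simpl in *; try contradiction. auto.
Qed.

Section Quad.
Variable N : nat.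
Variable t : nat -> R.
Hypothesis HN : (0 < N)%nat.
Hypothesis Ht : forall n, (n < N)%nat -> -1 <= t n <= 1.
Hypothesis Hinj : forall n m, (n < N)%nat -> (m < N)%nat -> t n = t m -> n = m.
Variable h : R.
Hypothesis Hh : forall s, -1 < s < 1 -> mindist t (N - 1) s <= h.

Lemma tau_sum (g : nat -> R) : rsum N (fun n => tau N t n * g n) = / 2 * rsum N (fun n => (cb N t n - ca N t n) * g n).
Proof. rewrite <- rsum_scal. apply rsum_ext. intros n Hn. rewrite (tau_eq N t n); auto. field. Qed.

Lemma gen_app (w rho : R -> R) : cont w -> cont rho -> (forall x, 0 <= rho x) ->
  (forall x y s r, x <= s <= y -> x <= r <= y -> Rabs (w s - w r) <= RInt rho x y) ->
  Rabs (rsum N (fun n => (cb N t n - ca N t n) * w (t n)) - RInt w (-1) 1) <= 2 * h * RInt rho (-1) 1.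
Proof.
intros. apply generic; auto.
- intros n Hn. destruct (cell_props N t Ht n Hn) as [? [? [? ?]]]. repeat split; try tauto.
  apply (cell_len N t HN Ht Hinj h Hh n Hn).
- apply (cell_nonoverlap N t Hinj).
- apply (cell_cover N t HN Ht Hinj).
Qed.

Lemma quad_abs (u du : R -> R) : (forall x, is_derive u x (du x)) -> cont du ->
  rsum N (fun n => tau N t n * Rabs (u (t n))) <= / 2 * RInt (fun s => Rabs (u s)) (-1) 1 + h * RInt (fun s => Rabs (du s)) (-1) 1.
Proof.
intros Hd Hc. rewrite tau_sum.
assert (Hu: cont u). { intros x. apply (ex_derive_continuous (K:=R_AbsRing) (V:=R_NormedModule)). eexists; apply Hd. }
pose proof (gen_app (fun s => Rabs (u s)) (fun s => Rabs (du s)) (cont_abs _ Hu) (cont_abs _ Hc)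
  (fun x => Rabs_pos _)) as G.
assert (G' : forall x y s r, x <= s <= y -> x <= r <= y -> Rabs (Rabs (u s) - Rabs (u r)) <= RInt (fun z => Rabs (du z)) x y).
{ intros. eapply Rle_trans. apply Rabs_triang_inv2. apply (ftc_bound u du); auto. }
specialize (G G'). apply Rabs_le_inv in G. lra.
Qed.

Lemma quad_diff (u du : R -> R) : (forall x, is_derive u x (du x)) -> cont du ->
  Rabs (rsum N (fun n => tau N t n * u (t n)) - / 2 * RInt u (-1) 1) <= h * RInt (fun s => Rabs (du s)) (-1) 1.
Proof.
intros Hd Hc. rewrite tau_sum.
assert (Hu: cont u). { intros x. apply (ex_derive_continuous (K:=R_AbsRing) (V:=R_NormedModule)). eexists; apply Hd. }
pose proof (gen_app u (fun s => Rabs (du s)) Hu (cont_abs _ Hc) (fun x => Rabs_pos _)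
  (ftc_bound u du Hd Hc)) as G.
apply Rabs_le_inv in G. apply Rabs_le. lra.
Qed.

End Quad.

Lemma csum_ext K f g : (forall k, (k < K)%nat -> f k = g k) -> csum K f = csum K g.
Proof. induction K; simpl; intros H; auto. rewrite IHK by (intros; apply H; lia). rewrite H by lia. auto. Qed.

Lemma csum_scal K c f : Cmult c (csum K f) = csum K (fun k => Cmult c (f k)).
Proof. induction K; simpl. apply injective_projections; simpl; ring.
rewrite <- IHK. ring. Qed.

Lemma fst_csum K f : fst (csum K f) = rsum K (fun k => fst (f k)).
Proof. induction K; simpl; auto. rewrite <- IHK. auto. Qed.
Lemma snd_csum K f : snd (csum K f) = rsum K (fun k => snd (f k)).
Proof. induction K; simpl; auto. rewrite <- IHK. auto. Qed.

Lemma Cmod_csum K f : Cmod (csum K f) <= rsum K (fun k => Cmod (f k)).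
Proof. induction K; simpl. rewrite Cmod_0; lra. eapply Rle_trans. apply Cmod_triangle. lra. Qed.

Lemma Cmod_le_sum z : Cmod z <= Rabs (fst z) + Rabs (snd z).
Proof.
unfold Cmod. rewrite <- (sqrt_square (Rabs (fst z) + Rabs (snd z))).
2: { pose proof (Rabs_pos (fst z)); pose proof (Rabs_pos (snd z)); lra. }
apply sqrt_le_1_alt. rewrite <- (pow2_abs (fst z)), <- (pow2_abs (snd z)).
pose proof (Rabs_pos (fst z)); pose proof (Rabs_pos (snd z)). nra.
Qed.

Lemma Cmod_fst z : Rabs (fst z) <= Cmod z.
Proof. unfold Cmod. rewrite <- sqrt_Rsqr_abs. apply sqrt_le_1_alt. unfold Rsqr. simpl. pose proof (pow2_ge_0 (snd z)). nra. Qed.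
Lemma Cmod_snd z : Rabs (snd z) <= Cmod z.
Proof. unfold Cmod. rewrite <- sqrt_Rsqr_abs. apply sqrt_le_1_alt. unfold Rsqr. simpl. pose proof (pow2_ge_0 (fst z)). nra. Qed.

Lemma Cmod_phi j s : Cmod (phi j s) = 1.
Proof. unfold Cmod, phi. simpl. rewrite !Rmult_1_r. pose proof (sin2_cos2 (IZR j * PI * s)) as E. unfold Rsqr in E. rewrite Rplus_comm, E. apply sqrt_1. Qed.

Lemma conj_sq q (a b : C) : Cmult (Cconj (Cmult (RtoC q) a)) (Cmult (RtoC q) b) = Cmult (RtoC (q * q)) (Cmult (Cconj a) b).
Proof. destruct a as [a1 a2], b as [b1 b2]. unfold Cmult, Cconj, RtoC; simpl. apply injective_projections; simpl; ring. Qed.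

Lemma conj_phi i j s (X : C) : Cmult (Cconj (phi i s)) (Cmult (phi j s) X) = Cmult (phi (j - i) s) X.
Proof.
destruct X as [p q]. unfold Cmult, Cconj, phi; simpl. rewrite minus_IZR.
replace ((IZR j - IZR i) * PI * s) with (IZR j * PI * s - IZR i * PI * s) by ring.
rewrite cos_minus, sin_minus. apply injective_projections; simpl; ring.
Qed.

Lemma fst_phiX j s (X : C) : fst (Cmult (phi j s) X) = fst X * cos (IZR j * PI * s) - snd X * sin (IZR j * PI * s).
Proof. destruct X; unfold phi, Cmult; simpl; ring. Qed.
Lemma snd_phiX j s (X : C) : snd (Cmult (phi j s) X) = fst X * sin (IZR j * PI * s) + snd X * cos (IZR j * PI * s).
Proof. destruct X; unfold phi, Cmult; simpl; ring. Qed.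

Definition jj (M k : nat) : Z := (Z.of_nat k - Z.of_nat M)%Z.
Definition alx (x : Z -> C) M k := fst (x (jj M k)).
Definition bex (x : Z -> C) M k := snd (x (jj M k)).
Definition fC (x : Z -> C) M s := csum (2 * M) (fun k => Cmult (phi (jj M k) s) (x (jj M k))).

Lemma U_on_eq N t M x n : U_on N t M (PL M x) n = Cmult (RtoC (sqrt (tau N t n))) (fC x M (t n)).
Proof.
unfold U_on, fC. rewrite csum_scal. apply csum_ext. intros k Hk. cbv zeta.
unfold PL. destruct excluded_middle_informative as [_|Hw].
- unfold Umat. fold (jj M k). ring.
- exfalso; apply Hw; unfold inwin; lia.
Qed.

Lemma Ustar_eq N t M x i : (forall n, (n < N)%nat -> 0 <= tau N t n) ->
  Ustar N t (U_on N t M (PL M x)) i =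
  csum N (fun n => Cmult (RtoC (tau N t n)) (Cmult (Cconj (phi i (t n))) (fC x M (t n)))).
Proof.
intros Htau. unfold Ustar. apply csum_ext. intros n Hn. rewrite U_on_eq. unfold Umat.
rewrite conj_sq, sqrt_sqrt; auto.
Qed.

Lemma fst_fC x M s : fst (fC x M s) = TR (2 * M) (alx x M) (bex x M) (jj M) s.
Proof. unfold fC, TR. rewrite fst_csum. apply rsum_ext. intros k _. rewrite fst_phiX. auto. Qed.
Lemma snd_fC x M s : snd (fC x M s) = TI (2 * M) (alx x M) (bex x M) (jj M) s.
Proof. unfold fC, TI. rewrite snd_csum. apply rsum_ext. intros k _. rewrite snd_phiX. auto. Qed.

Lemma G_eq x M i s : Cmult (Cconj (phi i s)) (fC x M s) =
  csum (2 * M) (fun k => Cmult (phi ((jj M k) - i) s) (x (jj M k))).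
Proof. unfold fC. rewrite csum_scal. apply csum_ext. intros k _. apply conj_phi. Qed.

Lemma fst_G x M i s : fst (Cmult (Cconj (phi i s)) (fC x M s)) = TR (2 * M) (alx x M) (bex x M) (fun k => (jj M k - i)%Z) s.
Proof. rewrite G_eq. unfold TR. rewrite fst_csum. apply rsum_ext. intros k _. rewrite fst_phiX. auto. Qed.
Lemma snd_G x M i s : snd (Cmult (Cconj (phi i s)) (fC x M s)) = TI (2 * M) (alx x M) (bex x M) (fun k => (jj M k - i)%Z) s.
Proof. rewrite G_eq. unfold TI. rewrite snd_csum. apply rsum_ext. intros k _. rewrite snd_phiX. auto. Qed.

Lemma sq_le1 (z : C) : Cmod z <= 1 -> fst z * fst z + snd z * snd z <= 1.
Proof. unfold Cmod. intros H. set (v := fst z ^ 2 + snd z ^ 2) in H.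
assert (0 <= v) by (unfold v; pose proof (pow2_ge_0 (fst z)); pose proof (pow2_ge_0 (snd z)); lra).
pose proof (sqrt_sqrt v H0). pose proof (sqrt_pos v). unfold v in *. simpl in *. nra. Qed.

Lemma sqrt_le_of_sq S c : 0 <= c -> S <= c * c -> sqrt S <= c.
Proof. intros. rewrite <- (sqrt_square c); auto. apply sqrt_le_1_alt; auto. Qed.

Lemma S_bound x M (m : nat -> Z) Bc : (forall j, Cmod (x j) <= 1) -> 0 <= Bc ->
  (forall k, (k < 2 * M)%nat -> Rabs (IZR (m k) * PI) <= Bc) ->
  sqrt (rsum (2 * M) (fun k => dal (alx x M) (bex x M) m k * dal (alx x M) (bex x M) m k
                                + dbe (alx x M) (bex x M) m k * dbe (alx x M) (bex x M) m k))
  <= sqrt 2 * sqrt (INR M) * Bc.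
Proof.
intros Hx HB Hm. apply sqrt_le_of_sq.
{ apply Rmult_le_pos; auto. apply Rmult_le_pos; apply sqrt_pos. }
replace (sqrt 2 * sqrt (INR M) * Bc * (sqrt 2 * sqrt (INR M) * Bc)) with
  ((sqrt 2 * sqrt 2) * (sqrt (INR M) * sqrt (INR M)) * (Bc * Bc)) by ring.
rewrite !sqrt_sqrt by (try lra; apply pos_INR).
replace (2 * INR M * (Bc * Bc)) with (rsum (2 * M) (fun _ => Bc * Bc)) by (rewrite rsum_const, mult_INR; simpl; ring).
apply rsum_le. intros k Hk. unfold dal, dbe, alx, bex.
pose proof (sq_le1 _ (Hx (jj M k))). specialize (Hm k Hk).
set (c := IZR (m k) * PI) in *.
assert (c * c <= Bc * Bc).
{ assert (E: Rabs c * Rabs c = c * c) by (rewrite <- Rabs_mult; apply Rabs_pos_eq; nra).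
  pose proof (Rabs_pos c). nra. }
pose proof (pow2_ge_0 c). nra.
Qed.

Lemma S0_bound x M : (forall j, Cmod (x j) <= 1) ->
  sqrt (rsum (2 * M) (fun k => alx x M k * alx x M k + bex x M k * bex x M k)) <= sqrt 2 * sqrt (INR M).
Proof.
intros Hx. apply sqrt_le_of_sq.
{ apply Rmult_le_pos; apply sqrt_pos. }
replace (sqrt 2 * sqrt (INR M) * (sqrt 2 * sqrt (INR M))) with
  ((sqrt 2 * sqrt 2) * (sqrt (INR M) * sqrt (INR M))) by ring.
rewrite !sqrt_sqrt by (try lra; apply pos_INR).
replace (2 * INR M) with (rsum (2 * M) (fun _ => 1)) by (rewrite rsum_const, mult_INR; simpl; ring).
apply rsum_le. intros k Hk. apply sq_le1. auto.
Qed.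

Lemma zbound (z : Z) (B : Z) : (Z.abs z <= B)%Z -> Rabs (IZR z * PI) <= IZR B * PI.
Proof. intros H. rewrite Rabs_mult, (Rabs_pos_eq PI) by (pose proof PI_RGT_0; lra).
rewrite <- abs_IZR. apply Rmult_le_compat_r. pose proof PI_RGT_0; lra. apply IZR_le; auto. Qed.

Section Core.
Variable N : nat.
Variable t : nat -> R.
Hypothesis HN : (0 < N)%nat.
Hypothesis Ht : forall n, (n < N)%nat -> -1 <= t n <= 1.
Hypothesis Hinj : forall n m, (n < N)%nat -> (m < N)%nat -> t n = t m -> n = m.
Variable h : R.
Hypothesis Hh : forall s, -1 < s < 1 -> mindist t (N - 1) s <= h.
Variable M : nat.
Variable x : Z -> C.
Hypothesis Hx : forall j, Cmod (x j) <= 1.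

Lemma tau_nonneg n : (n < N)%nat -> 0 <= tau N t n.
Proof. intros Hn. rewrite (tau_eq N t n); auto. destruct (cell_props N t Ht n Hn) as [? [? ?]]. lra. Qed.

Lemma jj_inj : forall k l, (k < 2 * M)%nat -> (l < 2 * M)%nat -> jj M k = jj M l -> k = l.
Proof. unfold jj; intros; lia. Qed.

Lemma jji_inj i : forall k l, (k < 2 * M)%nat -> (l < 2 * M)%nat -> (jj M k - i)%Z = (jj M l - i)%Z -> k = l.
Proof. unfold jj; intros; lia. Qed.

Lemma part1_piece (u du : R -> R) Bf Bd : (forall y, is_derive u y (du y)) -> cont du ->
  RInt (fun s => Rabs (u s)) (-1) 1 <= 2 * Bf ->
  RInt (fun s => Rabs (du s)) (-1) 1 <= 2 * Bd ->
  rsum N (fun n => tau N t n * Rabs (u (t n))) <= Bf + h * (2 * Bd).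
Proof.
intros Hd Hc H1 H2. eapply Rle_trans. apply (quad_abs N t HN Ht Hinj h Hh u du Hd Hc).
pose proof (h_nonneg N t h Hh). apply Rplus_le_compat. lra. apply Rmult_le_compat_l; auto.
Qed.

Lemma part1_core i : h * INR M <= 1 ->
  Cmod (Ustar N t (U_on N t M (PL M x)) i) <= 2 * sqrt 2 * (1 + 2 * PI) * sqrt (INR M).
Proof.
intros HhM. rewrite Ustar_eq by apply tau_nonneg.
eapply Rle_trans. apply Cmod_csum.
eapply Rle_trans with (rsum N (fun n => tau N t n * Rabs (TR (2 * M) (alx x M) (bex x M) (jj M) (t n)))
                     + rsum N (fun n => tau N t n * Rabs (TI (2 * M) (alx x M) (bex x M) (jj M) (t n)))).
{ rewrite <- rsum_plus. apply rsum_le. intros n Hn.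
  rewrite Cmod_mult, Cmod_R, Cmod_mult, Cmod_conj, Cmod_phi, Rmult_1_l.
  rewrite (Rabs_pos_eq _ (tau_nonneg n Hn)). rewrite <- Rmult_plus_distr_l.
  apply Rmult_le_compat_l. apply tau_nonneg; auto.
  rewrite <- fst_fC, <- snd_fC. apply Cmod_le_sum. }
set (A := sqrt 2 * sqrt (INR M)).
assert (HA: 0 <= A) by (unfold A; apply Rmult_le_pos; apply sqrt_pos).
assert (HMP: 0 <= INR M * PI) by (apply Rmult_le_pos; [apply pos_INR|pose proof PI_RGT_0; lra]).
assert (Hb: forall k, (k < 2 * M)%nat -> Rabs (IZR (jj M k) * PI) <= INR M * PI).
{ intros k Hk. rewrite INR_IZR_INZ. apply zbound. unfold jj. lia. }
assert (B1: rsum N (fun n => tau N t n * Rabs (TR (2 * M) (alx x M) (bex x M) (jj M) (t n))) <= A + h * (2 * (A * (INR M * PI)))).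
{ apply part1_piece with (du := TR (2 * M) (dal (alx x M) (bex x M) (jj M)) (dbe (alx x M) (bex x M) (jj M)) (jj M)).
  - intros; apply TR_deriv.
  - apply TR_cont.
  - eapply Rle_trans. apply L1_TR. apply jj_inj. apply Rmult_le_compat_l. lra. apply S0_bound; auto.
  - eapply Rle_trans. apply L1_TR. apply jj_inj. apply Rmult_le_compat_l. lra. apply S_bound; auto. }
assert (B2: rsum N (fun n => tau N t n * Rabs (TI (2 * M) (alx x M) (bex x M) (jj M) (t n))) <= A + h * (2 * (A * (INR M * PI)))).
{ apply part1_piece with (du := TI (2 * M) (dal (alx x M) (bex x M) (jj M)) (dbe (alx x M) (bex x M) (jj M)) (jj M)).
  - intros; apply TI_deriv.
  - apply TI_cont.
  - eapply Rle_trans. apply L1_TI. apply jj_inj. apply Rmult_le_compat_l. lra. apply S0_bound; auto.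
  - eapply Rle_trans. apply L1_TI. apply jj_inj. apply Rmult_le_compat_l. lra. apply S_bound; auto. }
assert (E: h * (2 * (A * (INR M * PI))) = 2 * A * PI * (h * INR M)) by ring.
assert (2 * A * PI * (h * INR M) <= 2 * A * PI * 1).
{ apply Rmult_le_compat_l; auto. pose proof PI_RGT_0. nra. }
replace (2 * sqrt 2 * (1 + 2 * PI) * sqrt (INR M)) with (2 * (A + 2 * A * PI)) by (unfold A; ring).
lra.
Qed.

Lemma fst_Rmult r (z : C) : fst (Cmult (RtoC r) z) = r * fst z.
Proof. destruct z; unfold Cmult, RtoC; simpl; ring. Qed.
Lemma snd_Rmult r (z : C) : snd (Cmult (RtoC r) z) = r * snd z.
Proof. destruct z; unfold Cmult, RtoC; simpl; ring. Qed.

Lemma part2_piece (u du : R -> R) : (forall y, is_derive u y (du y)) -> cont du ->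
  is_RInt u (-1) 1 0 ->
  Rabs (rsum N (fun n => tau N t n * u (t n))) <= h * RInt (fun s => Rabs (du s)) (-1) 1.
Proof.
intros Hd Hc H0. pose proof (quad_diff N t HN Ht Hinj h Hh u du Hd Hc) as Q.
rewrite (is_RInt_unique _ _ _ _ H0) in Q. replace (/ 2 * 0) with 0 in Q by ring.
rewrite Rminus_0_r in Q. auto.
Qed.

Lemma part2_core i Rr : (M <= Rr)%nat -> ~ inwin Rr i ->
  Cmod (Ustar N t (U_on N t M (PL M x)) i) <= 8 * sqrt 2 * PI * h * sqrt (INR M) * IZR (Z.abs i).
Proof.
intros HMR Hi. rewrite Ustar_eq by apply tau_nonneg.
eapply Rle_trans. apply Cmod_le_sum. rewrite fst_csum, snd_csum.
rewrite (rsum_ext N _ (fun n => tau N t n * TR (2 * M) (alx x M) (bex x M) (fun k => (jj M k - i)%Z) (t n)))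
  by (intros; rewrite fst_Rmult, fst_G; auto).
rewrite (rsum_ext N (fun k => snd _) (fun n => tau N t n * TI (2 * M) (alx x M) (bex x M) (fun k => (jj M k - i)%Z) (t n)))
  by (intros; rewrite snd_Rmult, snd_G; auto).
set (A := sqrt 2 * sqrt (INR M)).
assert (HA: 0 <= A) by (unfold A; apply Rmult_le_pos; apply sqrt_pos).
set (Bc := IZR (2 * Z.abs i) * PI).
assert (HBc: 0 <= Bc).
{ unfold Bc. apply Rmult_le_pos. apply IZR_le. lia. pose proof PI_RGT_0; lra. }
assert (Hin: inwin Rr i -> False) by auto. unfold inwin in Hin.
assert (Hb: forall k, (k < 2 * M)%nat -> Rabs (IZR (jj M k - i) * PI) <= Bc).
{ intros k Hk. apply zbound. unfold jj. lia. }
assert (Hnz: forall k, (k < 2 * M)%nat -> (jj M k - i)%Z <> 0%Z).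
{ intros k Hk. unfold jj. lia. }
pose proof (h_nonneg N t h Hh) as Hh0.
assert (B1: Rabs (rsum N (fun n => tau N t n * TR (2 * M) (alx x M) (bex x M) (fun k => (jj M k - i)%Z) (t n))) <= h * (2 * (A * Bc))).
{ eapply Rle_trans. apply part2_piece with
   (du := TR (2 * M) (dal (alx x M) (bex x M) (fun k => (jj M k - i)%Z)) (dbe (alx x M) (bex x M) (fun k => (jj M k - i)%Z)) (fun k => (jj M k - i)%Z)).
  - intros; apply TR_deriv.
  - apply TR_cont.
  - apply TR_mean0. auto.
  - apply Rmult_le_compat_l; auto. eapply Rle_trans. apply L1_TR. apply jji_inj.
    apply Rmult_le_compat_l. lra. apply S_bound; auto. }
assert (B2: Rabs (rsum N (fun n => tau N t n * TI (2 * M) (alx x M) (bex x M) (fun k => (jj M k - i)%Z) (t n))) <= h * (2 * (A * Bc))).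
{ eapply Rle_trans. apply part2_piece with
   (du := TI (2 * M) (dal (alx x M) (bex x M) (fun k => (jj M k - i)%Z)) (dbe (alx x M) (bex x M) (fun k => (jj M k - i)%Z)) (fun k => (jj M k - i)%Z)).
  - intros; apply TI_deriv.
  - apply TI_cont.
  - apply TI_mean0. auto.
  - apply Rmult_le_compat_l; auto. eapply Rle_trans. apply L1_TI. apply jji_inj.
    apply Rmult_le_compat_l. lra. apply S_bound; auto. }
replace (8 * sqrt 2 * PI * h * sqrt (INR M) * IZR (Z.abs i)) with (h * (2 * (A * Bc)) + h * (2 * (A * Bc))).
lra. unfold A, Bc. rewrite mult_IZR. ring.
Qed.

End Core.

Lemma Aop_bound N t w M Rr x i (Hw : forall i, 1 <= w i) :
  Cmod (Aop N t w M Rr x i) <=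
  (if excluded_middle_informative (inwin Rr i) then 0
   else / w i * Cmod (Ustar N t (U_on N t M (PL M x)) i)).
Proof.
unfold Aop. set (V := Ustar N t (U_on N t M (PL M x))). unfold PLperp, PL at 1.
destruct excluded_middle_informative as [Hi|Hi].
- replace (Cminus _ _) with (RtoC 0) by ring. rewrite Cmod_0. lra.
- replace (Cminus (Winv w V i) (RtoC 0)) with (Winv w V i) by ring.
  unfold Winv. rewrite Cmod_mult, Cmod_R. rewrite Rabs_pos_eq. lra.
  specialize (Hw i). apply Rlt_le, Rinv_0_lt_compat. lra.
Qed.

Lemma F_le N t w M Rr B : (forall x, (forall j, Cmod (x j) <= 1) -> forall i, Cmod (Aop N t w M Rr x i) <= B) ->
  Rbar_le (F_linf N t w M Rr) (Finite B).
Proof.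
intros H. unfold F_linf. destruct (Lub_Rbar_correct (fun r => exists x : Z -> C,
              (forall j, Cmod (x j) <= 1) /\ exists i, r = Cmod (Aop N t w M Rr x i))) as [_ Hl].
apply Hl. intros r [x [Hx [i ->]]]. simpl. apply H; auto.
Qed.

Lemma sup_out_fin Rr g B0 : (forall i, ~ inwin Rr i -> g i <= B0) ->
  exists s, sup_out Rr g = Finite s /\ forall i, ~ inwin Rr i -> g i <= s.
Proof.
intros H. unfold sup_out.
destruct (Lub_Rbar_correct (fun r => exists i, ~ inwin Rr i /\ r = g i)) as [Hub Hl].
revert Hub Hl. generalize (Lub_Rbar (fun r => exists i, ~ inwin Rr i /\ r = g i)).
intros l Hub Hl.
assert (Hi0: ~ inwin Rr (Z.of_nat Rr)) by (unfold inwin; lia).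
assert (H1: Rbar_le (Finite (g (Z.of_nat Rr))) l) by (apply Hub; exists (Z.of_nat Rr); auto).
assert (H2: Rbar_le l (Finite B0)) by (apply Hl; intros r [i [Hi ->]]; simpl; auto).
destruct l as [s| |]; simpl in *; try contradiction.
exists s. split; auto. intros i Hi. assert (Rbar_le (Finite (g i)) (Finite s)) by (apply Hub; exists i; auto).
simpl in H0. auto.
Qed.

Theorem lemma8p4 :
  (exists C : R, forall (N : nat) (t : nat -> R) (w : Z -> R) (M Rr : nat),
     (0 < N)%nat ->
     (forall n, (n < N)%nat -> -1 <= t n <= 1) ->
     (forall n m, (n < N)%nat -> (m < N)%nat -> t n = t m -> n = m) ->
     (forall i, 1 <= w i) ->
     hdens N t * INR M <= 1 ->
     Rbar_le (F_linf N t w M Rr)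
             (Rbar_mult (C * sqrt (INR M)) (sup_out Rr (fun i => / w i))))
  /\
  (forall c : R, 0 < c ->
   exists C : R, forall (N : nat) (t : nat -> R) (w : Z -> R) (M Rr : nat),
     (0 < N)%nat ->
     (forall n, (n < N)%nat -> -1 <= t n <= 1) ->
     (forall n m, (n < N)%nat -> (m < N)%nat -> t n = t m -> n = m) ->
     (forall i, 1 <= w i) ->
     (forall i, c * IZR (Z.abs i) <= w i) ->
     (M <= Rr)%nat ->
     hdens N t * INR M <= 1 ->
     Rbar_le (F_linf N t w M Rr)
             (Rbar_mult (C * hdens N t * sqrt (INR M))
                        (sup_out Rr (fun i => IZR (Z.abs i) / w i)))).
Proof.
split.
- exists (2 * sqrt 2 * (1 + 2 * PI)).
  intros N t w M Rr HN Ht Hinj Hw HhM.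
  destruct (sup_out_fin Rr (fun i => / w i) 1) as [s [Hs Hsi]].
  { intros i _. specialize (Hw i). rewrite <- Rinv_1. apply Rinv_le_contravar; lra. }
  rewrite Hs. simpl.
  assert (Hs0: 0 <= s).
  { eapply Rle_trans; [|apply (Hsi (Z.of_nat Rr)); unfold inwin; lia].
    specialize (Hw (Z.of_nat Rr)). apply Rlt_le, Rinv_0_lt_compat. lra. }
  set (K := 2 * sqrt 2 * (1 + 2 * PI) * sqrt (INR M)).
  assert (HK: 0 <= K).
  { unfold K. pose proof PI_RGT_0. pose proof (sqrt_pos 2). pose proof (sqrt_pos (INR M)).
    apply Rmult_le_pos; [|auto]. apply Rmult_le_pos; lra. }
  apply F_le. intros x Hx i. eapply Rle_trans. apply Aop_bound; auto.
  destruct excluded_middle_informative as [Hi|Hi].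
  + apply Rmult_le_pos; auto.
  + pose proof (part1_core N t HN Ht Hinj (hdens N t) (hdens_ub N t HN Ht) M x Hx i HhM) as P.
    fold K in P. specialize (Hsi i Hi). simpl in Hsi.
    assert (0 <= / w i) by (specialize (Hw i); apply Rlt_le, Rinv_0_lt_compat; lra).
    pose proof (Cmod_ge_0 (Ustar N t (U_on N t M (PL M x)) i)).
    rewrite (Rmult_comm K s). apply Rle_trans with (/ w i * K).
    apply Rmult_le_compat_l; auto. apply Rmult_le_compat_r; auto.
- intros c Hc. exists (8 * sqrt 2 * PI).
  intros N t w M Rr HN Ht Hinj Hw Hwc HMR HhM.
  destruct (sup_out_fin Rr (fun i => IZR (Z.abs i) / w i) (/ c)) as [s [Hs Hsi]].
  { intros i _. specialize (Hw i). specialize (Hwc i).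
    assert (0 <= IZR (Z.abs i)) by (apply IZR_le; lia).
    unfold Rdiv. apply (Rmult_le_reg_l c); auto. rewrite <- Rmult_assoc.
    rewrite Rinv_r by lra. apply (Rmult_le_reg_r (w i)); [lra|].
    rewrite Rmult_assoc, Rinv_l by lra. lra. }
  rewrite Hs. simpl.
  pose proof (h_nonneg N t (hdens N t) (hdens_ub N t HN Ht)) as Hh0.
  assert (Hs0: 0 <= s).
  { eapply Rle_trans; [|apply (Hsi (Z.of_nat Rr)); unfold inwin; lia].
    specialize (Hw (Z.of_nat Rr)). unfold Rdiv. apply Rmult_le_pos. apply IZR_le; lia.
    apply Rlt_le, Rinv_0_lt_compat. lra. }
  set (K := 8 * sqrt 2 * PI * hdens N t * sqrt (INR M)).
  assert (HK: 0 <= K).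
  { unfold K. pose proof PI_RGT_0. pose proof (sqrt_pos 2). pose proof (sqrt_pos (INR M)).
    apply Rmult_le_pos; [|auto]. apply Rmult_le_pos; [|auto]. apply Rmult_le_pos; lra. }
  apply F_le. intros x Hx i. eapply Rle_trans. apply Aop_bound; auto.
  destruct excluded_middle_informative as [Hi|Hi].
  + apply Rmult_le_pos; auto.
  + pose proof (part2_core N t HN Ht Hinj (hdens N t) (hdens_ub N t HN Ht) M x Hx i Rr HMR Hi) as P.
    fold K in P. specialize (Hsi i Hi). simpl in Hsi.
    assert (0 <= / w i) by (specialize (Hw i); apply Rlt_le, Rinv_0_lt_compat; lra).
    apply Rle_trans with (/ w i * (K * IZR (Z.abs i))).
    apply Rmult_le_compat_l; auto.
    replace (/ w i * (K * IZR (Z.abs i))) with (K * (IZR (Z.abs i) / w i)) by (unfold Rdiv; ring).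
    apply Rmult_le_compat_l; auto.
Qed.
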